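(* Let $d\ge 2$ and let $\rho$ be a diagonal symmetric state on $\mathbb{C}^d\otimes\mathbb{C}^d$ that is PPT, with associated matrix $M=M(\rho)$. Let $\ket{u}=\frac{1}{\sqrt d}(1,\dots,1)^T\in\mathbb{R}^d$ and let $M^{+}$ denote the Moore–Penrose pseudo-inverse of $M$. Suppose there exists $\varepsilon\ge 0$ such that (1) $\varepsilon\le M_{ij}$ for all $0\le i,j<d$; (2) $\ket{u}$ lies in the range of $M$ and $\varepsilon d\le \left(\bra{u}M^{+}\ket{u}\right)^{-1}$; (3) for all $0\le i<d$, $M_{ii}+\varepsilon(d-2)\ge\sum_{j\ne i}M_{ji}$. Then $\rho$ is separable.
   Context: Let $\{\ket{0},\dots,\ket{d-1}\}$ be the computational basis of $\mathbb{C}^d$. Define $\ket{D_{ii}}=\ket{ii}$ and, for $i<j$, $\ket{D_{ij}}=(\ket{ij}+\ket{ji})/\sqrt{2}$. A state $\rho$ on $\mathbb{C}^d\otimes\mathbb{C}^d$ is diagonal symmetric (DS) if $\rho=\sum_{0\le i\le j<d}p_{ij}\ket{D_{ij}}\bra{D_{ij}}$ with $p_{ij}\ge 0$ and $\sum_{i\le j}p_{ij}=1$; set $p_{ji}=p_{ij}$. Its associated matrix $M(\rho)$ is the real symmetric $d\times d$ matrix with $M(\rho)_{ii}=p_{ii}$ and $M(\rho)_{ij}=p_{ij}/2$ for $i\ne j$ (the paper writes $\rho_{ij}$ for the entries of $M(\rho)$). $\rho$ is PPT if its partial transpose with respect to the computational basis of the second factor is positive semidefinite. A state is separable if it is a convex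 combination of product states $\rho^A\otimes\rho^B$. *)

(* Defs.v *)
(* Complex numbers are R[i] (mathcomp-real-closed) over an
   arbitrary R : realType (the real numbers, up to isomorphism). *)
From HB Require Import structures.
From mathcomp Require Import all_boot all_order all_algebra.
From mathcomp Require Import complex mxtens.
From mathcomp Require Import reals.
Set Implicit Arguments. Unset Strict Implicit. Unset Printing Implicit Defensive.
Import Order.TTheory GRing.Theory Num.Theory.
Local Open Scope ring_scope.

Definition cr {R : realType} (x : R) : R[i] := Complex x 0.

Definition adj {R : realType} {m n : nat} (A : 'M[R[i]]_(m, n)) : 'M[R[i]]_(n, m) :=
  \matrix_(i, j) Num.conj (A j i).

Definition psd {R : realType} {n : nat} (A : 'M[R[i]]_n) : Prop :=
  adj A = A /\ forall v : 'cV[R[i]]_n, 0 <= (adj v *m A *m v) 0 0.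

Definition is_state {R : realType} {n : nat} (A : 'M[R[i]]_n) : Prop :=
  psd A /\ \tr A = 1.

Definition ket {R : realType} {d : nat} (i : 'I_d) : 'cV[R[i]]_d := delta_mx i 0.

Definition ket2 {R : realType} {d : nat} (i j : 'I_d) : 'cV[R[i]]_(d * d) :=
  ket i *t ket j.
Definition pidx {d : nat} (i j : 'I_d) : 'I_(d * d) := mxtens_index (i, j).

Definition Dket {R : realType} {d : nat} (i j : 'I_d) : 'cV[R[i]]_(d * d) :=
  if i == j then ket2 i i
  else (sqrtC (2 : R[i]))^-1 *: (ket2 i j + ket2 j i).

Definition DSstate {R : realType} {d : nat} (p : 'I_d -> 'I_d -> R) : 'M[R[i]]_(d * d) :=
  \sum_(i < d) \sum_(j < d | (i <= j)%N) cr (p i j) *: (Dket i j *m adj (Dket i j)).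

(* p is a valid coefficient family for a DS state: p_ij >= 0 and sum_{i<=j} p_ij = 1
   (only entries with i <= j are used) *)
Definition DS_coeffs {R : realType} {d : nat} (p : 'I_d -> 'I_d -> R) : Prop :=
  (forall i j : 'I_d, (i <= j)%N -> 0 <= p i j) /\
  \sum_(i < d) \sum_(j < d | (i <= j)%N) p i j = 1.

Definition assocM {R : realType} {d : nat} (p : 'I_d -> 'I_d -> R) : 'M[R]_d :=
  \matrix_(i, j) (if i == j then p i i
                  else if (i < j)%N then p i j / 2 else p j i / 2).

Definition ptB {R : realType} {d : nat} (A : 'M[R[i]]_(d * d)) : 'M[R[i]]_(d * d) :=
  \sum_(i < d) \sum_(j < d) \sum_(k < d) \sum_(l < d)
     A (pidx i j) (pidx k l) *: delta_mx (pidx i l) (pidx k j).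

Definition PPT {R : realType} {d : nat} (A : 'M[R[i]]_(d * d)) : Prop := psd (ptB A).

Definition separable {R : realType} {d : nat} (A : 'M[R[i]]_(d * d)) : Prop :=
  exists (n : nat) (w : 'I_n -> R) (a b : 'I_n -> 'M[R[i]]_d),
    (forall k, 0 <= w k) /\ \sum_(k < n) w k = 1 /\
    (forall k, is_state (a k)) /\ (forall k, is_state (b k)) /\
    A = \sum_(k < n) cr (w k) *: (a k *t b k).

Definition MP_pinv {R : realType} {n : nat} (M X : 'M[R]_n) : Prop :=
  M *m X *m M = M /\ X *m M *m X = X /\
  (M *m X)^T = M *m X /\ (X *m M)^T = X *m M.

Definition uvec {R : realType} (d : nat) : 'cV[R]_d :=
  const_mx (Num.sqrt (d%:R : R))^-1.

(* Main.v *)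
Require Import Defs.
From HB Require Import structures.
From mathcomp Require Import all_boot all_order all_algebra.
From mathcomp Require Import complex mxtens.
From mathcomp Require Import reals.
From mathcomp Require Import ring lra.
Set Implicit Arguments. Unset Strict Implicit. Unset Printing Implicit Defensive.
Import Order.TTheory GRing.Theory Num.Theory.
Local Open Scope ring_scope.

Section S.
Variable R : realType.
Local Notation C := R[i].

Lemma crE (x : R) : cr x = real_complex R x. Proof. by []. Qed.
Lemma crD (x y : R) : cr (x + y) = cr x + cr y. Proof. by rewrite !crE rmorphD. Qed.
Lemma crM (x y : R) : cr (x * y) = cr x * cr y. Proof. by rewrite !crE rmorphM. Qed.
Lemma crB (x y : R) : cr (x - y) = cr x - cr y. Proof. by rewrite !crE rmorphB. Qed.
Lemma cr0 : cr 0 = 0 :> C. Proof. by rewrite !crE rmorph0. Qed.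
Lemma cr1 : cr 1 = 1 :> C. Proof. by rewrite !crE rmorph1. Qed.
Lemma cr_nat n : cr n%:R = n%:R :> C. Proof. by rewrite !crE rmorph_nat. Qed.
Lemma crV (x : R) : cr x^-1 = (cr x)^-1. Proof. by rewrite !crE fmorphV. Qed.
Lemma crX (x : R) n : cr (x ^+ n) = (cr x) ^+ n. Proof. by rewrite !crE rmorphXn. Qed.
Lemma cr_sum I (r : seq I) (P : pred I) (F : I -> R) :
  cr (\sum_(i <- r | P i) F i) = \sum_(i <- r | P i) cr (F i).
Proof. by rewrite !crE rmorph_sum. Qed.
Lemma cr_real (x : R) : cr x \is Num.real.
Proof. by rewrite complex_real. Qed.
Lemma conj_cr (x : R) : Num.conj (cr x) = cr x.
Proof. by rewrite conj_Creal // cr_real. Qed.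
Lemma cr_inj : injective (@cr R). Proof. by move=> x y []. Qed.
Lemma cr_ge0 (x : R) : (0 <= cr x) = (0 <= x).
Proof. by rewrite crE ler0c. Qed.

Lemma conjCi' : Num.conj ('i : C) = - 'i.
Proof. exact: conjCi. Qed.

Lemma adjK m n (A : 'M[C]_(m,n)) : adj (adj A) = A.
Proof. by apply/matrixP=> i j; rewrite !mxE conjCK. Qed.
Lemma adj_mul m n k (A : 'M[C]_(m,n)) (B : 'M[C]_(n,k)) : adj (A *m B) = adj B *m adj A.
Proof.
apply/matrixP=> i j; rewrite !mxE rmorph_sum; apply: eq_bigr=> l _.
by rewrite !mxE rmorphM mulrC.
Qed.
Lemma adjZ m n c (A : 'M[C]_(m,n)) : adj (c *: A) = Num.conj c *: adj A.
Proof. by apply/matrixP=> i j; rewrite !mxE rmorphM. Qed.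
Lemma adjD m n (A B : 'M[C]_(m,n)) : adj (A + B) = adj A + adj B.
Proof. by apply/matrixP=> i j; rewrite !mxE rmorphD. Qed.

Lemma mul_adj11 (x : 'M[C]_1) : (x *m adj x) 0 0 = x 0 0 * Num.conj (x 0 0).
Proof. by rewrite !mxE big_ord1 !mxE. Qed.

Lemma outerE n (u v : 'cV[C]_n) i j : (u *m adj v) i j = u i 0 * Num.conj (v j 0).
Proof. by rewrite !mxE big_ord1 !mxE. Qed.

Lemma tr_tens m n (A : 'M[C]_m) (B : 'M[C]_n) : \tr (A *t B) = \tr A * \tr B.
Proof.
rewrite /mxtrace (reindex (@mxtens_index m n)); last first.
  by apply: onW_bij; exists (@mxtens_unindex m n); [exact: mxtens_indexK|exact: mxtens_unindexK].
rewrite big_distrlr /= pair_bigA /=; apply: eq_bigr=> [[i j]] _.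
by rewrite tensmxE.
Qed.

Definition sepcone d (A : 'M[C]_(d * d)) : Prop :=
  exists (n : nat) (w : 'I_n -> R) (a b : 'I_n -> 'M[C]_d),
    (forall k, 0 <= w k) /\
    (forall k, is_state (a k)) /\ (forall k, is_state (b k)) /\
    A = \sum_(k < n) cr (w k) *: (a k *t b k).

Lemma sepcone0 d : sepcone (0 : 'M[C]_(d * d)).
Proof.
exists 0%N, (fun _ => 0), (fun _ => 0), (fun _ => 0).
split; first by case.
split; first by case.
split; first by case.
by rewrite big_ord0.
Qed.

Lemma sepconeD d (A B : 'M[C]_(d * d)) : sepcone A -> sepcone B -> sepcone (A + B).
Proof.
move=> [n [w [a [b [w0 [sa [sb ->]]]]]]] [m [w' [a' [b' [w0' [sa' [sb' ->]]]]]]].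
exists (n + m)%N.
exists (fun k => match split k with inl i => w i | inr j => w' j end).
exists (fun k => match split k with inl i => a i | inr j => a' j end).
exists (fun k => match split k with inl i => b i | inr j => b' j end).
split; first by move=> k; case: (split k).
split; first by move=> k; case: (split k).
split; first by move=> k; case: (split k).
rewrite big_split_ord /=; congr (_ + _); apply: eq_bigr=> i _.
  by rewrite (unsplitK (inl i)).
by rewrite (unsplitK (inr i)).
Qed.

Lemma sepconeZ d c (A : 'M[C]_(d * d)) : 0 <= c -> sepcone A -> sepcone (cr c *: A).
Proof.
move=> c0 [n [w [a [b [w0 [sa [sb ->]]]]]]].
exists n, (fun k => c * w k), a, b.
do !split=> //; first by move=> k; rewrite mulr_ge0.
rewrite scaler_sumr; apply: eq_bigr=> k _; by rewrite scalerA crM.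
Qed.

Lemma sepcone_sum d I (r : seq I) (P : pred I) (F : I -> 'M[C]_(d * d)) :
  (forall i, P i -> sepcone (F i)) -> sepcone (\sum_(i <- r | P i) F i).
Proof.
move=> H; elim/big_rec: _; first exact: sepcone0.
by move=> i A Pi sA; apply: sepconeD=> //; apply: H.
Qed.

Lemma psd_outer n (psi : 'cV[C]_n) c : 0 <= c -> psd (cr c *: (psi *m adj psi)).
Proof.
move=> c0; split.
  by rewrite adjZ conj_cr adj_mul adjK.
move=> v; rewrite -scalemxAr -scalemxAl mxE.
rewrite !mulmxA -(mulmxA (adj v *m psi)).
have -> : adj psi *m v = adj (adj v *m psi) by rewrite adj_mul adjK.
by rewrite mul_adj11 mulr_ge0 ?cr_ge0 // mulcJ_ge0.
Qed.

Lemma sepcone_gen d (psi : 'cV[C]_d) c w :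
  (adj psi *m psi) 0 0 = cr c -> 0 < c -> 0 <= w ->
  sepcone (cr w *: ((psi *m adj psi) *t (psi *m adj psi))).
Proof.
move=> hc c0 w0.
pose a := cr c^-1 *: (psi *m adj psi).
have sa : is_state a.
  split; first by apply: psd_outer; rewrite invr_ge0 ltW.
  rewrite /a mxtraceZ mxtrace_mulC /mxtrace big_ord1 hc -crM mulVf ?cr1 //.
  by rewrite gt_eqF.
exists 1%N, (fun _ => w * c ^+ 2), (fun _ => a), (fun _ => a).
do !split=> //; first by move=> _; rewrite mulr_ge0 // exprn_ge0 // ltW.
rewrite big_ord1; apply/matrixP=> i j.
case: (mxtens_indexP i)=> i1 i2; case: (mxtens_indexP j)=> j1 j2.
rewrite /a !mxE !mxtens_indexK /= !crM !crV ?crX.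
have cn0 : cr c != 0 by rewrite -cr0 (inj_eq cr_inj) gt_eqF.
field.
exact: cn0.
Qed.

Lemma iE k : ('i : C) ^+ k = nth 0 [:: 1; 'i; -1; -'i] (k %% 4).
Proof.
have i4 : ('i : C) ^+ 4 = 1 by rewrite (exprM _ 2 2) sqrCi sqrrN expr1n.
rewrite {1}(divn_eq k 4) exprD mulnC exprM i4 expr1n mul1r.
have := ltn_pmod k (isT : (0 < 4)%N).
case: (k %% 4)%N => [|[|[|[|r]]]] //= _; rewrite ?expr0 ?expr1 ?sqrCi //.
by rewrite exprS sqrCi mulrN1.
Qed.

Lemma sum4 q : \sum_(z < 4) ('i : C) ^+ (z * q) = if (q %% 4 == 0)%N then 4 else 0.
Proof.
have E (z : 'I_4) : ('i : C) ^+ (z * q) = 'i ^+ (z * (q %% 4)).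
  by rewrite iE [in RHS]iE modnMmr.
rewrite (eq_bigr (fun z : 'I_4 => ('i : C) ^+ (z * (q %% 4)))); last by move=> z _; exact: E.
have := ltn_pmod q (isT : (0 < 4)%N).
case: (q %% 4)%N => [|[|[|[|r]]]] // _; rewrite !big_ord_recr big_ord0 /= !iE /=; ring.
Qed.

Lemma sum_phase m n : (m <= 2)%N -> (n <= 2)%N ->
  \sum_(z < 4) (('i : C) ^+ z) ^+ m * (Num.conj ('i ^+ z)) ^+ n = if m == n then 4 else 0.
Proof.
move=> hm hn.
have E (z : 'I_4) : (('i : C) ^+ z) ^+ m * (Num.conj ('i ^+ z)) ^+ n = 'i ^+ (z * (m + 3 * n)).
  have ci : Num.conj ('i : C) = 'i ^+ 3 by rewrite conjCi iE.
  have -> : Num.conj (('i : C) ^+ z) = ('i ^+ 3) ^+ z by rewrite -ci; exact: rmorphXn.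
  by rewrite -!exprM -exprD; congr (_ ^+ _); ring.
rewrite (eq_bigr _ (fun z _ => E z)) sum4; clear E.
by case: m n hm hn => [|[|[|m]]] [|[|[|n]]].
Qed.

Definition ms d (a b c e : 'I_d) : bool := ((a == c) && (b == e)) || ((a == e) && (b == c)).

Lemma prod_pow1 d (x : 'I_d -> C) (a : 'I_d) : \prod_t x t ^+ (t == a) = x a.
Proof.
rewrite (bigD1 a) //= eqxx expr1 big1 ?mulr1 // => t /negbTE ->; by rewrite expr0.
Qed.

Lemma ms_iff d (a b c e : 'I_d) :
  [forall t, ((t == a) + (t == b) == (t == c) + (t == e))%N] = ms a b c e.
Proof.
rewrite /ms; apply/forallP/idP.
  move=> H; case: (eqVneq a c) => [ac|ac].
    subst c; move: (H b); rewrite !eqxx eqn_add2l /=.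
    by case: (b == e).
  move: (H a); rewrite eqxx (negbTE ac) /=.
  case: (a =P e) => [ae|_]; last by case: (a == b).
  subst e; move=> _; move: (H b); rewrite !eqxx [X in _ == X]addnC eqn_add2l /=.
  by case: (b == c); rewrite ?orbT.
move=> /orP [/andP [/eqP <- /eqP <-]|/andP [/eqP <- /eqP <-]] t //.
by rewrite addnC.
Qed.

Lemma prod_if d (P : pred 'I_d) (x : C) :
  \prod_t (if P t then x else 0) = if [forall t, P t] then x ^+ d else 0.
Proof.
case: (boolP [forall t, P t]) => [/forallP H | /forallPn [t Pt]].
  by rewrite (eq_bigr (fun _ => x)) ?prodr_const ?card_ord // => t _; rewrite H.
by rewrite (bigD1 t) //= (negbTE Pt) mul0r.
Qed.

Lemma char_sum d (a b c e : 'I_d) :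
  \sum_(k : {ffun 'I_d -> 'I_4})
     ((('i : C) ^+ k a * 'i ^+ k b) * (Num.conj ('i ^+ k c) * Num.conj ('i ^+ k e)))
  = if ms a b c e then 4 ^+ d else 0.
Proof.
pose f := fun t (z : 'I_4) => (('i : C) ^+ z) ^+ ((t == a) + (t == b))%N *
                              (Num.conj ('i ^+ z)) ^+ ((t == c) + (t == e))%N.
transitivity (\sum_(k : {ffun 'I_d -> 'I_4}) \prod_t f t (k t)).
  apply: eq_bigr => k _; rewrite /f big_split /=.
  rewrite (eq_bigr (fun t => ('i ^+ k t) ^+ (t == a) * ('i ^+ k t) ^+ (t == b)));
    last by move=> t _; rewrite exprD.
  rewrite [X in _ = _ * X](eq_bigr (fun t => (Num.conj ('i ^+ k t)) ^+ (t == c) *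
                                  (Num.conj ('i ^+ k t)) ^+ (t == e)));
    last by move=> t _; rewrite exprD.
  by rewrite !big_split /= !(prod_pow1 (fun t => ('i : C) ^+ k t))
             !(prod_pow1 (fun t => Num.conj (('i : C) ^+ k t))).
rewrite -bigA_distr_bigA /=.
rewrite (eq_bigr (fun t => if ((t == a) + (t == b) == (t == c) + (t == e))%N then 4 else 0)).
  by rewrite prod_if ms_iff.
move=> t _; rewrite /f sum_phase //.
  by case: (t == a); case: (t == b).
by case: (t == c); case: (t == e).
Qed.

Definition Phi d (N : 'I_d -> 'I_d -> R) : 'M[C]_(d * d) :=
  \matrix_(r, s) (if ms (@mxtens_unindex d d r).1 (@mxtens_unindex d d r).2
                        (@mxtens_unindex d d s).1 (@mxtens_unindex d d s).2
                  then cr (N (@mxtens_unindex d d r).1 (@mxtens_unindex d d r).2) else 0).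

Lemma PhiE d (N : 'I_d -> 'I_d -> R) a b c e :
  Phi N (mxtens_index (a, b)) (mxtens_index (c, e)) = if ms a b c e then cr (N a b) else 0.
Proof. by rewrite mxE !mxtens_indexK. Qed.

Lemma mx2P d (A B : 'M[C]_(d * d)) :
  (forall a b c e, A (mxtens_index (a, b)) (mxtens_index (c, e)) =
                   B (mxtens_index (a, b)) (mxtens_index (c, e))) -> A = B.
Proof.
move=> H; apply/matrixP=> i j.
by case: (mxtens_indexP i)=> a b; case: (mxtens_indexP j)=> c e.
Qed.

Lemma Phi_ind d (S : pred 'I_d) t0 : S t0 ->
  sepcone (Phi (fun a b => (S a)%:R * (S b)%:R)).
Proof.
move=> St0.
pose psi (k : {ffun 'I_d -> 'I_4}) : 'cV[C]_d := \col_t ((S t)%:R * 'i ^+ k t).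
have -> : Phi (fun a b => (S a)%:R * (S b)%:R) =
   \sum_k cr ((4 ^+ d)^-1) *: ((psi k *m adj (psi k)) *t (psi k *m adj (psi k))).
  apply: mx2P => a b c e; rewrite PhiE summxE.
  rewrite (eq_bigr (fun k : {ffun 'I_d -> 'I_4} => cr ((4 ^+ d)^-1) * ((S a)%:R * (S b)%:R * (S c)%:R * (S e)%:R) *
     ((('i : C) ^+ k a * 'i ^+ k b) * (Num.conj ('i ^+ k c) * Num.conj ('i ^+ k e))))).
    rewrite -mulr_sumr char_sum.
    case: ifP => hms; last by rewrite mulr0.
    have h4 : (4 : C) ^+ d != 0 by rewrite expf_neq0 // pnatr_eq0.
    rewrite crV crX cr_nat crM !cr_nat.
    move: hms => /orP [/andP [/eqP <- /eqP <-]| /andP [/eqP <- /eqP <-]];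
      case: (S a); case: (S b); rewrite /=; field; exact: h4.
  move=> k _; rewrite mxE tensmxE !outerE !mxE !rmorphM /= !conjC_nat.
  ring.
apply: sepcone_sum => k _.
apply: (@sepcone_gen d (psi k) (#|S|%:R)).
- rewrite mxE (eq_bigr (fun t => ((S t)%:R : C))); last first.
    move=> t _; rewrite !mxE rmorphM /= conjC_nat.
    have ci : Num.conj (('i : C) ^+ k t) * 'i ^+ k t = 1.
      by rewrite mulrC -normCK normrX normCi !expr1n.
    by case: (S t); rewrite /= ?mul0r ?mulr0 // !mul1r ci.
  rewrite cr_nat -(sum1_card S) natr_sum [RHS]big_mkcond /=.
  by apply: eq_bigr => i _; rewrite unfold_in; case: (S i).
- by rewrite ltr0n; apply/card_gt0P; exists t0.
- by rewrite invr_ge0 exprn_ge0.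
Qed.

Lemma Phi_ext d (N N' : 'I_d -> 'I_d -> R) : (forall a b, N a b = N' a b) -> Phi N = Phi N'.
Proof. by move=> H; apply: mx2P => a b c e; rewrite !PhiE H. Qed.

Lemma sPhiD d (N1 N2 : 'I_d -> 'I_d -> R) :
  sepcone (Phi N1) -> sepcone (Phi N2) -> sepcone (Phi (fun a b => N1 a b + N2 a b)).
Proof.
move=> h1 h2; have -> : Phi (fun a b => N1 a b + N2 a b) = Phi N1 + Phi N2.
  apply: mx2P => a b c e; rewrite !mxE !mxtens_indexK.
  by case: ifP; rewrite ?crD ?addr0.
exact: sepconeD.
Qed.

Lemma sPhiZ d c (N : 'I_d -> 'I_d -> R) : 0 <= c ->
  sepcone (Phi N) -> sepcone (Phi (fun a b => c * N a b)).
Proof.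
move=> c0 h; have -> : Phi (fun a b => c * N a b) = cr c *: Phi N.
  apply: mx2P => a b c' e; rewrite !mxE !mxtens_indexK.
  by case: ifP; rewrite ?crM ?mulr0.
exact: sepconeZ.
Qed.

Lemma sPhi_sum d I (r : seq I) (P : pred I) (F : I -> 'I_d -> 'I_d -> R) :
  (forall i, P i -> sepcone (Phi (F i))) ->
  sepcone (Phi (fun a b => \sum_(i <- r | P i) F i a b)).
Proof.
move=> H; have -> : Phi (fun a b => \sum_(i <- r | P i) F i a b) = \sum_(i <- r | P i) Phi (F i).
  apply: mx2P => a b c e; rewrite summxE PhiE.
  under [RHS]eq_bigr => i _ do rewrite PhiE.
  case: ifP => _; first by rewrite cr_sum.
  by rewrite big1.
exact: sepcone_sum.
Qed.

Lemma sum_delta d (G : 'I_d -> R) a : \sum_i (a == i)%:R * G i = G a.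
Proof.
rewrite (bigD1 a) //= eqxx mul1r big1 ?addr0 // => i.
by rewrite eq_sym => /negbTE ->; rewrite mul0r.
Qed.

Lemma D1 d (F : 'I_d -> 'I_d -> R) a b :
  \sum_i \sum_j F i j * ((a == i)%:R * (b == i)%:R) = (b == a)%:R * \sum_j F a j.
Proof.
transitivity (\sum_i (a == i)%:R * ((b == i)%:R * \sum_j F i j)).
  by apply: eq_bigr => i _; rewrite -mulr_suml; ring.
exact: sum_delta.
Qed.

Lemma D2 d (F : 'I_d -> 'I_d -> R) a b :
  \sum_i \sum_j F i j * ((a == i)%:R * (b == j)%:R) = F a b.
Proof.
transitivity (\sum_i (a == i)%:R * (\sum_j (b == j)%:R * F i j)).
  apply: eq_bigr => i _; rewrite mulr_sumr; apply: eq_bigr => j _; ring.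
by rewrite sum_delta sum_delta.
Qed.

Lemma D3 d (F : 'I_d -> 'I_d -> R) a b :
  \sum_i \sum_j F i j * ((a == j)%:R * (b == i)%:R) = F b a.
Proof.
rewrite exchange_big /= -(D2 (fun i j => F j i) a b) /=.
by apply: eq_bigr => i _; apply: eq_bigr => j _; ring.
Qed.

Lemma D4 d (F : 'I_d -> 'I_d -> R) a b :
  \sum_i \sum_j F i j * ((a == j)%:R * (b == j)%:R) = (b == a)%:R * \sum_i F i a.
Proof.
by rewrite exchange_big /= -(D1 (fun i j => F j i) a b).
Qed.

Definition Ind d (S : pred 'I_d) (a b : 'I_d) : R := (S a)%:R * (S b)%:R.
Definition cM d (M : 'I_d -> 'I_d -> R) eps (i j : 'I_d) : R :=
  if i == j then 0 else (M i j - eps) / 2.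
Definition lM d (M : 'I_d -> 'I_d -> R) eps (i : 'I_d) : R :=
  M i i - eps - 2 * \sum_j cM M eps i j.

Lemma decompM d (M : 'I_d -> 'I_d -> R) eps (Msym : forall i j, M i j = M j i) a b :
  M a b = eps * Ind xpredT a b
        + \sum_i \sum_j cM M eps i j * Ind (fun t => (t == i) || (t == j)) a b
        + \sum_i lM M eps i * Ind (pred1 i) a b.
Proof.
rewrite /Ind /=.
have T2 : forall i j, cM M eps i j * (((a == i) || (a == j))%:R * ((b == i) || (b == j))%:R)
   = cM M eps i j * ((a == i)%:R * (b == i)%:R) + cM M eps i j * ((a == i)%:R * (b == j)%:R)
   + cM M eps i j * ((a == j)%:R * (b == i)%:R) + cM M eps i j * ((a == j)%:R * (b == j)%:R).
  move=> i j; rewrite /cM; case: (eqVneq i j) => [->|ij]; first by rewrite !mul0r !addr0.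
  have orD x : (((x == i) || (x == j))%:R : R) = (x == i)%:R + (x == j)%:R.
    case: (eqVneq x i) => [->|]; last by rewrite add0r.
    by rewrite (negbTE ij) addr0.
  rewrite !orD; ring.
under eq_bigr => i _ do (under eq_bigr => j _ do rewrite T2; rewrite !big_split /=).
rewrite !big_split /= D1 D2 D3 D4.
have -> : \sum_i lM M eps i * ((a == i)%:R * (b == i)%:R) = (b == a)%:R * lM M eps a.
  rewrite -(sum_delta (fun i => (b == i)%:R * lM M eps i) a).
  by apply: eq_bigr => i _; ring.
have cs : forall i j, cM M eps i j = cM M eps j i by move=> i j; rewrite /cM eq_sym Msym.
have t1 : (true%:R : R) = 1 by [].
have f0 : (false%:R : R) = 0 by [].
case: (eqVneq a b) => [<-|ab].
  have -> : \sum_i cM M eps i a = \sum_i cM M eps a i by apply: eq_bigr => i _; rewrite cs.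
  rewrite !t1.
  have -> : cM M eps a a = 0 by rewrite /cM eqxx.
  rewrite /lM /=; ring.
rewrite f0 /cM (negbTE ab) eq_sym (negbTE ab) (Msym b a) /=; field.
by [].
Qed.

Lemma sepcone_PhiM d (M : 'I_d -> 'I_d -> R) eps (i0 : 'I_d) :
  (forall i j, M i j = M j i) -> 0 <= eps -> (forall i j, eps <= M i j) ->
  (forall i, \sum_(j | j != i) M j i <= M i i + eps * (d%:R - 2)) ->
  sepcone (Phi M).
Proof.
move=> Msym e0 eM hdom.
rewrite (Phi_ext (decompM eps Msym)).
apply: sPhiD; first apply: sPhiD.
- by apply: sPhiZ => //; apply: (@Phi_ind d xpredT i0).
- apply: sPhi_sum => i _; apply: sPhi_sum => j _; apply: sPhiZ.
    rewrite /cM; case: ifP => // _.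
    by rewrite divr_ge0 // subr_ge0.
  by apply: (@Phi_ind d (fun t => (t == i) || (t == j)) i); rewrite eqxx.
- apply: sPhi_sum => i _; apply: sPhiZ; last first.
    by apply: (@Phi_ind d (pred1 i) i); rewrite /= eqxx.
  rewrite /lM.
  have E1 : \sum_(j < d) eps = eps + \sum_(j < d | j != i) eps by rewrite (bigD1 i).
  rewrite sumr_const card_ord -mulr_natr in E1.
  have E2 : \sum_j cM M eps i j = (\sum_(j | j != i) M j i - \sum_(j | j != i) eps) / 2.
    rewrite (bigD1 i) //= {1}/cM eqxx add0r.
    rewrite (eq_bigr (fun j => (M j i - eps) / 2)); last first.
      by move=> j ji; rewrite /cM eq_sym (negbTE ji) Msym.
    by rewrite -mulr_suml sumrB.
  rewrite E2.
  have := hdom i; rewrite mulrBr.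
  set S := \sum_(j | j != i) M j i.
  set X := eps * d%:R.
  set Y := \sum_(j | j != i) eps.
  move: E1; rewrite -/X -/Y => E1 h.
  have -> : Y = X - eps by rewrite E1; ring.
  lra.
Qed.

Lemma ket2E d (i j a b : 'I_d) (k : 'I_(1 * 1)) :
  (ket2 i j : 'cV[C]_(d * d)) (mxtens_index (a, b)) k = ((a == i) && (b == j))%:R.
Proof.
have e1 : forall x : 'I_1, (x == 0) = true by move=> x; rewrite ord1.
rewrite /ket2 /ket mxE mxtens_indexK /= !mxE !e1 !andbT.
by case: (a == i); case: (b == j); rewrite /= ?mul1r ?mul0r.
Qed.

Lemma ket2sumE d (i j a b : 'I_d) (k : 'I_(1 * 1)) (x : C) :
  (x *: (ket2 i j + ket2 j i) : 'cV[C]_(d * d)) (mxtens_index (a, b)) k =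
  x * (((a == i) && (b == j))%:R + ((a == j) && (b == i))%:R).
Proof. by move: (ket2E i j a b k) (ket2E j i a b k); rewrite !mxE => -> ->. Qed.

Definition dl d (a b i j : 'I_d) : R := ((a == i)%:R * (b == j)%:R).
Definition wt d (i j : 'I_d) : R := if i == j then 1 / 4 else 1 / 2.

Lemma sqrt2_conj : Num.conj ((sqrtC (2 : C))^-1) = (sqrtC 2)^-1.
Proof. by rewrite conj_Creal // rpredV ger0_real // sqrtC_ge0 ler0n. Qed.

Lemma TE d (i j a b c e : 'I_d) :
  ((Dket i j : 'cV[C]_(d * d)) *m adj (Dket i j)) (mxtens_index (a, b)) (mxtens_index (c, e))
  = cr (wt i j * ((dl a b i j + dl a b j i) * (dl c e i j + dl c e j i))).
Proof.
have bE : forall x y : bool, ((x && y)%:R : C) = x%:R * y%:R.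
  by move=> [] [] /=; rewrite ?mul1r ?mul0r.
rewrite outerE /Dket /wt /dl; case: (eqVneq i j) => [<-|ij].
  rewrite !ket2E conjC_nat !bE !crM !crD !crM !cr_nat crV !cr_nat cr1.
  by field.
rewrite !ket2sumE rmorphM /= sqrt2_conj rmorphD /= !conjC_nat !bE.
rewrite !crM !crD !crM !cr_nat crV !cr_nat cr1.
have s2 : (sqrtC (2 : C))^-1 * (sqrtC 2)^-1 = 1 / 2.
  by rewrite -invfM -expr2 sqrtCK div1r.
transitivity (((sqrtC (2 : C))^-1 * (sqrtC 2)^-1) *
  (((a == i)%:R * (b == j)%:R + (a == j)%:R * (b == i)%:R) *
   ((c == i)%:R * (e == j)%:R + (c == j)%:R * (e == i)%:R))); first by ring.
by rewrite s2.
Qed.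

Definition Tm d (i j : 'I_d) : 'M[C]_(d * d) := Dket i j *m adj (Dket i j).

Lemma Dket_sym d (i j : 'I_d) : (Dket j i : 'cV[C]_(d * d)) = Dket i j.
Proof. by rewrite /Dket eq_sym; case: eqP => [->|] //; rewrite addrC. Qed.

Lemma DS_sym d (p : 'I_d -> 'I_d -> R) :
  DSstate p = \sum_i \sum_j cr (assocM p i j) *: Tm i j.
Proof.
pose A (i j : 'I_d) := if (i <= j)%N then cr (p i j) *: Tm i j else 0.
transitivity (\sum_i \sum_j cr (1/2) *: (A i j + A j i)); last first.
  apply: eq_bigr => i _; apply: eq_bigr => j _.
  rewrite /A mxE; case: (ltngtP i j) => h.
  - have ij : (i == j) = false by apply/eqP => e; move: h; rewrite e ltnn.
    rewrite ij addr0 scalerA -crM; congr (cr _ *: _); ring.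
  - have ij : (i == j) = false by apply/eqP => e; move: h; rewrite e ltnn.
    rewrite ij add0r scalerA -crM /Tm Dket_sym.
    congr (cr _ *: _); ring.
  - have ij : i = j by apply: val_inj.
    subst j; rewrite eqxx scalerDr !scalerA -scalerDl -!crM -crD.
    have -> : 1 / 2 * p i i + 1 / 2 * p i i = p i i :> R by field.
    by [].
under eq_bigr => i _ do rewrite -scaler_sumr big_split /=.
rewrite -scaler_sumr big_split /= [X in _ + X]exchange_big /=.
rewrite scalerDr -scalerDl -crD.
have -> : 1 / 2 + 1 / 2 = 1 :> R by field.
rewrite cr1 scale1r /DSstate; apply: eq_bigr => i _.
by rewrite big_mkcond.
Qed.

Lemma assocM_sym d (p : 'I_d -> 'I_d -> R) i j : assocM p i j = assocM p j i.
Proof.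
rewrite /assocM !mxE eq_sym; case: (eqVneq j i) => [->|ji] //.
case: (ltngtP i j) => h //.
by move/val_inj: h => h; rewrite h eqxx in ji.
Qed.

Lemma DS_Phi d (p : 'I_d -> 'I_d -> R) :
  DSstate p = Phi (fun a b => assocM p a b).
Proof.
rewrite DS_sym; apply: mx2P => a b c e; rewrite summxE.
under eq_bigr => i _ do (rewrite summxE; under eq_bigr => j _ do rewrite mxE /Tm TE -crM).
rewrite -(eq_bigr _ (fun i _ => cr_sum _ _ _)) -cr_sum PhiE.
transitivity (cr (if ms a b c e then assocM p a b else 0)); last by case: ifP; rewrite ?cr0.
congr cr.
pose F i j := assocM p i j * wt i j.
transitivity (\sum_i \sum_j (
   (F i j * dl c e i j) * ((a == i)%:R * (b == j)%:R) +
   (F i j * dl c e j i) * ((a == i)%:R * (b == j)%:R) +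
   (F i j * dl c e i j) * ((a == j)%:R * (b == i)%:R) +
   (F i j * dl c e j i) * ((a == j)%:R * (b == i)%:R))).
  by apply: eq_bigr => i _; apply: eq_bigr => j _; rewrite /F /dl; ring.
under eq_bigr => i _ do rewrite !big_split /=.
rewrite !big_split /=.
rewrite (D2 (fun i j => F i j * dl c e i j)) (D2 (fun i j => F i j * dl c e j i)).
rewrite (D3 (fun i j => F i j * dl c e i j)) (D3 (fun i j => F i j * dl c e j i)) /=.
have -> : F b a = F a b by rewrite /F /wt assocM_sym eq_sym.
rewrite /F /wt /dl /ms [a == c]eq_sym [b == e]eq_sym [a == e]eq_sym [b == c]eq_sym.
case: (eqVneq a b) => [<-|ab].
  by case: (c == a); case: (e == a); rewrite /=; field.
have h1 : ~~ ((c == a) && (c == b)).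
  by apply/negP => /andP [/eqP ca /eqP cb]; move: ab; rewrite -ca -cb eqxx.
move: h1; case: (c == a); case: (c == b); case: (e == a); case: (e == b);
  by rewrite /= => // _; field.
Qed.

Lemma tr_Phi d (N : 'I_d -> 'I_d -> R) : \tr (Phi N) = cr (\sum_a \sum_b N a b).
Proof.
rewrite /mxtrace (reindex (@mxtens_index d d)); last first.
  by apply: onW_bij; exists (@mxtens_unindex d d); [exact: mxtens_indexK|exact: mxtens_unindexK].
rewrite pair_bigA /= cr_sum; apply: eq_bigr => [[a b]] _.
by rewrite PhiE /ms !eqxx.
Qed.

Lemma sum_assocM d (p : 'I_d -> 'I_d -> R) : DS_coeffs p ->
  \sum_a \sum_b assocM p a b = 1.
Proof.
move=> [_ hs].
pose q (a b : 'I_d) := if (a <= b)%N then p a b else 0.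
transitivity (\sum_(a < d) \sum_(b < d) (q a b + q b a) / 2).
  apply: eq_bigr => a _; apply: eq_bigr => b _.
  rewrite /assocM mxE /q; case: (ltngtP a b) => h.
  - have ab : (a == b) = false by apply/eqP => e; move: h; rewrite e ltnn.
    by rewrite ab addr0.
  - have ab : (a == b) = false by apply/eqP => e; move: h; rewrite e ltnn.
    by rewrite ab add0r.
  - have ab : a = b by apply: val_inj.
    by subst b; rewrite eqxx; field.
under eq_bigr => a _ do rewrite -mulr_suml big_split /=.
rewrite -mulr_suml big_split /= [X in _ + X]exchange_big /=.

have -> : \sum_(a < d) \sum_(b < d) q a b = \sum_(a < d) \sum_(b < d | (a <= b)%N) p a b.
  apply: eq_bigr => a _; rewrite [RHS]big_mkcond.
  by apply: eq_bigr.
by rewrite hs; field.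
Qed.
End S.

Theorem theorem5 (R : realType) (d : nat) (p : 'I_d -> 'I_d -> R) :
  (2 <= d)%N ->
  DS_coeffs p ->
  PPT (DSstate p) ->
  (exists eps : R,
     0 <= eps /\
     (forall i j : 'I_d, eps <= assocM p i j) /\
     (exists v : 'cV[R]_d, assocM p *m v = uvec d) /\
     (exists X : 'M[R]_d, MP_pinv (assocM p) X /\
        eps * d%:R <= (((uvec d)^T *m X *m uvec d) 0 0)^-1) /\
     (forall i : 'I_d,
        assocM p i i + eps * (d%:R - 2) >= \sum_(j < d | j != i) assocM p j i)) ->
  separable (DSstate p).
Proof.
move=> hd hp _ [eps [e0 [eM [_ [_ hdom]]]]].
have d0 : (0 < d)%N by apply: leq_trans hd.
pose i0 : 'I_d := Ordinal d0.
have sc : sepcone (DSstate p).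
  rewrite DS_Phi; apply: (@sepcone_PhiM R d _ eps i0) => //.
  exact: assocM_sym.
move: sc => [n [w [a [b [w0 [sa [sb E]]]]]]].
exists n, w, a, b; split => //; split; last by split.
have : \tr (DSstate p) = cr 1 by rewrite DS_Phi tr_Phi sum_assocM.
rewrite E raddf_sum /= => h.
apply: cr_inj; rewrite -h cr_sum; apply: eq_bigr => k _.
by rewrite mxtraceZ tr_tens (proj2 (sa k)) (proj2 (sb k)) !mulr1.
Qed.
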